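(* Let $n_{\max}$ be a parameter, let $W$ be a (sufficiently large) power-of-two polynomial in $n_{\max}$, and let $h : [U] \to [W]$ be the tabulation weight function defined as follows. Write each key $x \in [U]$ as $x = x_{\mathrm{high}} \cdot W^4 + x_{\mathrm{mid}} \cdot W + x_{\mathrm{low}}$ with $x_{\mathrm{low}} \in [W]$, $x_{\mathrm{mid}} \in [W^3]$, and set $x_{\mathrm{midlow}} = x_{\mathrm{mid}} \cdot W + x_{\mathrm{low}} \in [W^4]$. Let $A_1,\dots,A_{m}$, with $m = \operatorname{poly}(W)$, be independent random arrays of length $W^4$, each of which is the concatenation of $W^3$ independent uniformly random permutations of $[W]$, and let $f : [U/W^4] \to [m]$ be a random function drawn from a pairwise-independent family (independently of the arrays). Define $h(x) = A_{f(x_{\mathrm{high}})}[x_{\mathrm{midlow}}]$. Then for any set $S = \{x_1,\dots,x_n\} \subseteq [U]$ of $n \le n_{\max}$ keys, with probability at least $1 - 1/\operatorname{poly}(n_{\max})$ (over the random choice of the arrays and $f$), the weights $h(x_1),\dots,h(x_n)$ are pairwise distinct.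
   Context: $[k]$ denotes $\{0,1,\dots,k-1\}$. The number $m$ of arrays is a sufficiently large polynomial in $W$, so that two distinct inputs collide under the pairwise-independent $f$ with probability at most $1/\operatorname{poly}(W)$. *)

(* Defs.v *)
From HB Require Import structures.
From mathcomp Require Export all_boot all_order all_algebra all_fingroup.
Set Implicit Arguments. Unset Strict Implicit. Unset Printing Implicit Defensive.
Import Order.TTheory GRing.Theory Num.Theory.

Definition perm_app (n : nat) (p : {perm 'I_n}) (j : nat) : nat :=
  if (insub j : option 'I_n) is Some o then val (p o) else j.

(* An array of length W^4 given as the concatenation of W^3 permutations of
   [W]: entry i is (permutation number i / W) applied to (i mod W). *)
Definition arr_get (W : nat) (A : {ffun 'I_(W ^ 3) -> {perm 'I_W}}) (i : nat) : nat :=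
  if (insub (i %/ W) : option 'I_(W ^ 3)) is Some b then perm_app (A b) (i %% W)
  else 0.

Definition tab_hash (W m K : nat)
    (A : {ffun 'I_m -> {ffun 'I_(W ^ 3) -> {perm 'I_W}}})
    (f : {ffun 'I_K -> 'I_m}) (x : nat) : nat :=
  if (insub (x %/ W ^ 4) : option 'I_K) is Some hi then arr_get (A (f hi)) (x %% W ^ 4)
  else 0.

(* A pairwise-independent family of functions [K] -> [m], given as a finite
   (multi)set indexed by I, drawn uniformly: each f(a) is uniform on [m] and
   for a <> b the pair (f(a), f(b)) is uniform on [m]^2. *)
Definition pairwise_indep (K m : nat) (I : finType) (fam : I -> {ffun 'I_K -> 'I_m}) : Prop :=
  [/\ 0 < #|I|,
      (forall (a : 'I_K) (i : 'I_m), #|[pred t | fam t a == i]| * m = #|I|) &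
      (forall (a b : 'I_K), a != b -> forall (i j : 'I_m),
          #|[pred t | (fam t a == i) && (fam t b == j)]| * m ^ 2 = #|I|)].

Definition unif_prob (T : finType) (E : pred T) : rat :=
  (#|[pred t | E t]|%:R / #|T|%:R)%R.

(* Main.v *)
Require Import Defs.
Import Order.TTheory GRing.Theory Num.Theory.

Lemma gen_count (T : finType) (W : nat) (P : pred T) (X Y : T -> 'I_W)
  (tau : {perm 'I_W} -> T -> T) :
  (forall s, injective (tau s)) ->
  (forall s t, X (tau s t) = s (X t)) ->
  (forall s t, P t -> Y (tau s t) = Y t) ->
  (#|[set t | P t && (X t == Y t)]| * W <= #|T|)%N.
Proof.
move=> tinj tX tY.
set D := [set t | P t && (X t == Y t)].
pose f := fun p : T * 'I_W => tau (tperm (X p.1) p.2) p.1.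
have -> : (#|D| * W = #|setX D [set: 'I_W]|)%N by rewrite cardsX cardsT card_ord.
rewrite -(card_in_imset (f := f)); first exact: max_card.
move=> [t1 u1] [t2 u2]; rewrite !inE /= => /andP[/andP[P1 E1] _] /andP[/andP[P2 E2] _].
rewrite /f /= => Hf.
have Hu : u1 = u2 by move: (congr1 X Hf); rewrite !tX !tpermL.
have Hy := congr1 Y Hf; rewrite !tY // in Hy.
move/eqP: E1 => E1; move/eqP: E2 => E2.
rewrite -E1 -E2 in Hy; rewrite Hy Hu in Hf.
by rewrite (tinj _ _ _ Hf) Hu.
Qed.
Lemma tab_dec (W m K : nat) (x : 'I_(K * W ^ 4)) : (0 < W)%N ->
  exists (hx : 'I_K) (bx : 'I_(W ^ 3)) (lx : 'I_W),
    (forall A (f : {ffun 'I_K -> 'I_m}), tab_hash A f x = val (A (f hx) bx lx)) /\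
    (x : nat) = (hx * W ^ 4 + bx * W + lx)%N.
Proof.
move=> W0.
have W40 : (0 < W ^ 4)%N by rewrite expn_gt0 W0.
have H1 : (x %/ W ^ 4 < K)%N by rewrite ltn_divLR // ltn_ord.
have H2 : ((x %% W ^ 4) %/ W < W ^ 3)%N by rewrite ltn_divLR // -expnSr ltn_pmod.
have H3 : ((x %% W ^ 4) %% W < W)%N by rewrite ltn_pmod.
exists (Ordinal H1), (Ordinal H2), (Ordinal H3); split.
  move=> A f; rewrite /tab_hash (insubT (fun i => i < K)%N H1) /arr_get.
  rewrite (insubT (fun i => i < W ^ 3)%N H2) /perm_app (insubT (fun i => i < W)%N H3).
  congr (val (A (f _) _ _)); exact: val_inj.
rewrite /= -addnA -divn_eq.
by rewrite -divn_eq.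
Qed.
Lemma hit_count (K m : nat) (I : finType) (fam : I -> {ffun 'I_K -> 'I_m}) (a b : 'I_K) :
  pairwise_indep fam -> a != b -> (0 < m)%N ->
  (#|[set i | fam i a == fam i b]| * m = #|I|)%N.
Proof.
case=> _ _ H2 ab m0.
have E : #|[set i | fam i a == fam i b]| =
   (\sum_(j : 'I_m) #|[pred i | (fam i a == j) && (fam i b == j)]|)%N.
  rewrite -sum1_card (partition_big (fun i => fam i a) xpredT) //.
  apply: eq_bigr => j _; rewrite -sum1_card; apply: eq_bigl => i.
  rewrite !inE /=; case: eqP => [->|]; first by rewrite andbb.
  move=> ne; apply/esym/negbTE; apply/andP=> [[/eqP e1 /eqP e2]]; apply: ne; by rewrite e1 e2.
apply/eqP; rewrite -(eqn_pmul2r m0) -mulnA mulnn E big_distrl /=.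
rewrite (eq_bigr (fun _ => #|I|)); last by move=> j _; exact: H2.
by rewrite sum_nat_const card_ord mulnC.
Qed.

Lemma pair_bound (W m K : nat) (I : finType) (fam : I -> {ffun 'I_K -> 'I_m})
  (x y : 'I_(K * W ^ 4)) : (0 < W)%N -> (W <= m)%N -> pairwise_indep fam -> x != y ->
  (#|[set om : {ffun 'I_m -> {ffun 'I_(W ^ 3) -> {perm 'I_W}}} * I |
      tab_hash om.1 (fam om.2) x == tab_hash om.1 (fam om.2) y]| * W
   <= 2 * #|{: {ffun 'I_m -> {ffun 'I_(W ^ 3) -> {perm 'I_W}}} * I}|)%N.
Proof.
move=> W0 Wm pind xy.
have [hx [bx [lx [Hx Ex]]]] := @tab_dec W m K x W0.
have [hy [by_ [ly [Hy Ey]]]] := @tab_dec W m K y W0.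
pose T : finType := ({ffun 'I_m -> {ffun 'I_(W ^ 3) -> {perm 'I_W}}} * I)%type.
pose X (t : T) := t.1 (fam t.2 hx) bx lx.
pose Y (t : T) := t.1 (fam t.2 hy) by_ ly.
pose P (t : T) := (fam t.2 hx != fam t.2 hy) || (bx != by_).
pose upd (A : {ffun 'I_m -> {ffun 'I_(W ^ 3) -> {perm 'I_W}}}) j b (s : {perm 'I_W}) :=
  [ffun j' => [ffun b' => if (j' == j) && (b' == b) then (A j' b' * s)%g else A j' b']].
pose tau s (t : T) : T := (upd t.1 (fam t.2 hx) bx s, t.2).
have E1 : (#|[set t | P t && (X t == Y t)]| * W <= #|T|)%N.
  apply: (@gen_count T W P X Y tau).
  - move=> s [A i] [A' i'] [eA ei]; subst i'; congr pair; apply/ffunP => j; apply/ffunP => b.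
    move/ffunP/(_ j): eA; rewrite !ffunE => /ffunP/(_ b); rewrite !ffunE; case: ifP => _ //; exact: mulIg.
  - by move=> s [A i]; rewrite /X /tau /upd /= !ffunE !eqxx /= permM.
  - move=> s [A i]; rewrite /P /= => HP; rewrite /Y /= !ffunE; case: ifP => //.
    by case/andP => /eqP e1 /eqP e2; move: HP; rewrite e1 e2 !eqxx.
have E2 : (#|[set t | ~~ P t && (X t == Y t)]| * W <= #|T|)%N.
  case: (eqVneq hx hy) => [ehx | nhx].
    rewrite (_ : [set t | _] = set0) ?cards0 //; apply/setP => t; rewrite !inE.
    apply/negbTE; apply/andP => [[nP eXY]].
    move: nP; rewrite negb_or !negbK => /andP[_ /eqP eb].
    move: eXY; rewrite /X /Y ehx eb => /eqP/perm_inj el.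
    by move: xy; rewrite -val_eqE /= Ex Ey ehx eb el eqxx.
  apply: (@leq_trans (#|{ffun 'I_m -> {ffun 'I_(W ^ 3) -> {perm 'I_W}}}| *
                      #|[set i | fam i hx == fam i hy]| * W)).
    rewrite leq_mul2r; apply/orP; right.
    rewrite -cardsT -cardsX; apply: subset_leq_card; apply/subsetP => -[A i].
    by rewrite !inE negb_or negbK => /andP[/andP[-> _] _].
  rewrite -mulnA card_prod leq_mul2l; apply/orP; right.
  rewrite -(@hit_count K m I fam hx hy pind nhx (leq_trans W0 Wm)); by rewrite leq_mul2l Wm orbT.
apply: (@leq_trans ((#|[set t | P t && (X t == Y t)]| + #|[set t | ~~ P t && (X t == Y t)]|) * W)).
  rewrite leq_mul2r; apply/orP; right.
  apply: (@leq_trans #|[set t | P t && (X t == Y t)] :|: [set t | ~~ P t && (X t == Y t)]|); last first.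
    by rewrite cardsU leq_subr.
  apply: subset_leq_card; apply/subsetP => t; rewrite !inE Hx Hy val_eqE.
  by rewrite /X /Y => ->; case: (P t).
by rewrite mulnDl mul2n -addnn leq_add.
Qed.

Lemma card_bigcup_le (T J : finType) (P : pred J) (F : J -> {set T}) :
  (#|\bigcup_(j | P j) F j| <= \sum_(j | P j) #|F j|)%N.
Proof.
apply: (big_ind2 (fun (A : {set T}) n => #|A| <= n)%N) => //.
  by rewrite cards0.
move=> A a B b HA HB; apply: leq_trans (leq_add HA HB).
by rewrite cardsU leq_subr.
Qed.

Local Open Scope ring_scope.

Theorem lemma3p1 :
  forall d : nat, exists c : nat,
  forall (nmax W m K : nat) (I : finType) (fam : I -> {ffun 'I_K -> 'I_m})
         (S : {set 'I_(K * W ^ 4)}),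
    (0 < nmax)%N ->
    (exists k : nat, W = 2 ^ k)%N ->
    (nmax ^ c <= W)%N ->
    (W ^ c <= m)%N ->
    pairwise_indep fam ->
    (#|S| <= nmax)%N ->
    unif_prob
      (fun om : {ffun 'I_m -> {ffun 'I_(W ^ 3) -> {perm 'I_W}}} * I =>
         [exists x in S, exists y in S,
            (x != y) && (tab_hash om.1 (fam om.2) x == tab_hash om.1 (fam om.2) y)])
    <= ((nmax ^ d)%:R)^-1.
Proof.
move=> d; exists d.+3 => nmax W m K I fam S n0 [k Wk] nW Wm pind Sn.
have W0 : (0 < W)%N by rewrite Wk expn_gt0.
have Wm' : (W <= m)%N.
  apply: leq_trans Wm; rewrite -{1}(expn1 W); exact: leq_pexp2l.
pose T : finType := ({ffun 'I_m -> {ffun 'I_(W ^ 3) -> {perm 'I_W}}} * I)%type.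
pose E (x y : 'I_(K * W ^ 4)) := [set t : T | (x != y) &&
        (tab_hash t.1 (fam t.2) x == tab_hash t.1 (fam t.2) y)].
rewrite /unif_prob; set ev := (X in (#|X|%:R / _)).
have Hev : #|ev| = #|\bigcup_(x in S) \bigcup_(y in S) E x y|.
  apply: eq_card => t; rewrite !inE; apply/existsP/bigcupP.
    case=> x /andP[xS /existsP[y /andP[yS H]]]; exists x => //.
    by apply/bigcupP; exists y => //; rewrite inE.
  case=> x xS /bigcupP[y yS]; rewrite inE => H; exists x; rewrite xS /=.
  by apply/existsP; exists y; rewrite yS.
suff key : (#|ev| * nmax ^ d <= #|T|)%N.
  have [T0|Tpos] := posnP #|T|.
    by rewrite [#|{: _}|]T0 invr0 mulr0 invr_ge0 ler0n.
  rewrite ler_pdivrMr ?ltr0n // mulrC ler_pdivlMr ?ltr0n ?expn_gt0 ?n0 //.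
  by rewrite -natrM ler_nat.
have [n1|n2] := leqP nmax 1.
  suff -> : #|ev| = 0%N by [].
  rewrite Hev; apply/eqP; rewrite cards_eq0; apply/eqP/setP => t; rewrite inE.
  apply/negbTE/negP => /bigcupP[x xS /bigcupP[y yS]]; rewrite inE => /andP[xy _].
  have /card_le1_eqP H := leq_trans Sn n1.
  by move: xy; rewrite (H x y xS yS) eqxx.
have hE : forall x y, (#|E x y| * W <= 2 * #|T|)%N.
  move=> x y; case: (eqVneq x y) => [->|xy].
    rewrite (_ : E y y = set0) ?cards0 //; apply/setP => t; by rewrite !inE eqxx.
  rewrite (_ : E x y = [set om : T | tab_hash om.1 (fam om.2) x == tab_hash om.1 (fam om.2) y]).
    exact: pair_bound.
  by apply/setP => t; rewrite !inE xy.
have hU : (#|ev| * W <= #|S| * (#|S| * (2 * #|T|)))%N.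
  rewrite Hev. apply: (leq_trans (leq_mul (card_bigcup_le _ _ (fun x => x \in S) (fun x => \bigcup_(y in S) E x y)) (leqnn W))).
  rewrite big_distrl /= -sum_nat_const; apply: leq_sum => x _.
  apply: (leq_trans (leq_mul (card_bigcup_le _ _ (fun y => y \in S) (fun y => E x y)) (leqnn W))).
  rewrite big_distrl /= -sum_nat_const; apply: leq_sum => y _; exact: hE.
set p := (nmax ^ d)%N.
have h1 : (2 * nmax * nmax * p <= W)%N.
  apply: leq_trans nW; rewrite !expnS -/p !mulnA.
  by apply: leq_mul => //; apply: leq_mul => //; apply: leq_mul.
have B : (#|S| * (#|S| * (2 * #|T|)) <= #|T| * (2 * nmax * nmax))%N.
  apply: leq_trans (leq_mul Sn (leq_mul Sn (leqnn _))) _.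
  by rewrite [X in (_ <= X)%N]mulnC -!mulnA (mulnCA nmax 2 #|T|) (mulnCA nmax 2).
have A : (#|ev| * p * (2 * nmax * nmax) <= #|ev| * W)%N.
  by rewrite -mulnA leq_mul2l [X in (X <= _)%N]mulnC h1 orbT.
rewrite -(@leq_pmul2r (2 * nmax * nmax)); last by rewrite !muln_gt0 n0.
exact: leq_trans A (leq_trans hU B).
Qed.
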